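(* Let $\models$ be an intersective mixed consequence truth-relation on a finite set $V$ of truth values, with induced consequence relation $\vdash$ in a constant expressive setting. The following are equivalent: (i) $\vdash$ admits both a G-disjunction and a G-conjunction; (ii) every minimal representation of $\models$ is based on a disjunction-conjunction-compatible list of sets of designated values; (iii) some representation of $\models$ is based on a disjunction-conjunction-compatible list of sets of designated values.
   Context: $V$ contains distinct $1,0$; sets of designated values: $\mathcal{D}\subseteq V$, $1\in\mathcal{D}$, $0\notin\mathcal{D}$. $\gamma\models_{\mathcal{D}_p,\mathcal{D}_c}\delta$ iff ($\gamma\subseteq\mathcal{D}_p\Rightarrow\delta\cap\mathcal{D}_c\neq\emptyset$). An intersective mixed truth-relation is $\models_{\mathcal{D}_p^1,\mathcal{D}_c^1}\cap\dots\cap\models_{\mathcal{D}_p^K,\mathcal{D}_c^K}$; such a list is a representation, based on the list $\mathcal{D}_p^1,\mathcal{D}_c^1,\dots,\mathcal{D}_p^K,\mathcal{D}_c^K$; minimal if $K$ is least possible. A list $\mathcal{D}_1,\dots,\mathcal{D}_n$ is disjunction-conjunction-compatible if (DC1) for each $\mathcal{D}_i$, either some truth value belongs to $\mathcal{D}_i$ and to no other set of the list, or $\mathcal{D}_i$ is included in another, distinct set of the list; and (DC2) for every non-empty sublist $\mathcal{D}'_1,\dots,\mathcal{D}'_{n'}$ there is $x\in V$ such that for every $i$: $x\in\mathcal{D}_i$ iff $\exists i'$ with $\mathcal{D}'_{i'}\subseteq\mathcal{D}_i$. Semantics: valuations mapping atoms to $V$, connectives interpreted by fixed truth functions, extended compositionally,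 every assignment to finitely many distinct atoms realized; constant expressive: every value is the constant value of some formula. $\Gamma\vdash\Delta$ iff $v(\Gamma)\models v(\Delta)$ for all $v$; $\Gamma,A=\Gamma\cup\{A\}$. G-conjunction: $\Gamma,A\wedge B\vdash\Delta$ iff $\Gamma,A,B\vdash\Delta$; $\Gamma\vdash A\wedge B,\Delta$ iff ($\Gamma\vdash A,\Delta$ and $\Gamma\vdash B,\Delta$). G-disjunction: $\Gamma\vdash A\vee B,\Delta$ iff $\Gamma\vdash A,B,\Delta$; $\Gamma,A\vee B\vdash\Delta$ iff ($\Gamma,A\vdash\Delta$ and $\Gamma,B\vdash\Delta$); all for every $\Gamma,\Delta,A,B$. *)

(* Defs.v *)
From mathcomp Require Import all_boot.
From mathcomp Require Import boolp.

Set Implicit Arguments.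
Unset Strict Implicit.
Unset Printing Implicit Defensive.

Definition designated (V : finType) (one zero : V) (D : {set V}) : bool :=
  (one \in D) && (zero \notin D).

Definition mtr (V : finType) (Dp Dc : {set V}) (g d : {set V}) : bool :=
  (g \subset Dp) ==> (d :&: Dc != set0).

Definition is_rep (V : finType) (one zero : V)
    (R : {set V} -> {set V} -> bool) (L : seq ({set V} * {set V})) : Prop :=
  [/\ L != [::],
      all (fun p => designated one zero p.1 && designated one zero p.2) L
    & forall g d : {set V}, R g d = all (fun p => mtr p.1 p.2 g d) L].

Definition intersective_mixed (V : finType) (one zero : V)
    (R : {set V} -> {set V} -> bool) : Prop :=
  exists L, is_rep one zero R L.

Definition minimal_rep (V : finType) (one zero : V)
    (R : {set V} -> {set V} -> bool) (L : seq ({set V} * {set V})) : Prop :=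
  is_rep one zero R L /\
  forall L', is_rep one zero R L' -> size L <= size L'.

Definition based_list (V : finType) (L : seq ({set V} * {set V})) : seq {set V} :=
  flatten [seq [:: p.1; p.2] | p <- L].

Definition DC1 (V : finType) (L : seq {set V}) : Prop :=
  forall D, D \in L ->
    (exists x, x \in D /\ forall D', D' \in L -> x \in D' -> D' = D) \/
    (exists D', [/\ D' \in L, D' != D & D \subset D']).

Definition DC2 (V : finType) (L : seq {set V}) : Prop :=
  forall L' : seq {set V}, subseq L' L -> L' != [::] ->
    exists x : V, forall D, D \in L ->
      (x \in D) = has (fun D' : {set V} => D' \subset D) L'.

Definition dc_compatible (V : finType) (L : seq {set V}) : Prop :=
  DC1 L /\ DC2 L.

Inductive form (C : Type) (ar : C -> nat) : Type :=
  | Var : nat -> form ar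
  | App : forall c : C, ('I_(ar c) -> form ar) -> form ar.

Fixpoint eval (V : Type) (C : Type) (ar : C -> nat)
    (interp : forall c : C, ('I_(ar c) -> V) -> V) (v : nat -> V)
    (A : form ar) {struct A} : V :=
  match A with
  | Var n => v n
  | App c a => interp c (fun i => eval interp v (a i))
  end.

Definition constant_expressive (V : Type) (C : Type) (ar : C -> nat)
    (interp : forall c : C, ('I_(ar c) -> V) -> V) : Prop :=
  forall x : V, exists A : form ar, forall v : nat -> V, eval interp v A = x.

Definition imgv (V : finType) (C : Type) (ar : C -> nat)
    (interp : forall c : C, ('I_(ar c) -> V) -> V) (v : nat -> V)
    (G : form ar -> Prop) : {set V} :=
  [set x | `[< exists A, G A /\ eval interp v A = x >] ].

Definition conseq (V : finType) (C : Type) (ar : C -> nat)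
    (interp : forall c : C, ('I_(ar c) -> V) -> V)
    (R : {set V} -> {set V} -> bool) (G D : form ar -> Prop) : Prop :=
  forall v : nat -> V, R (imgv interp v G) (imgv interp v D).

Definition add (F : Type) (G : F -> Prop) (A : F) : F -> Prop :=
  fun B => G B \/ B = A.

Definition G_conjunction (F : Type) (cs : (F -> Prop) -> (F -> Prop) -> Prop)
    (cj : F -> F -> F) : Prop :=
  forall (G D : F -> Prop) (A B : F),
    (cs (add G (cj A B)) D <-> cs (add (add G A) B) D) /\
    (cs G (add D (cj A B)) <-> (cs G (add D A) /\ cs G (add D B))).

Definition G_disjunction (F : Type) (cs : (F -> Prop) -> (F -> Prop) -> Prop)
    (dj : F -> F -> F) : Prop :=
  forall (G D : F -> Prop) (A B : F),
    (cs G (add D (dj A B)) <-> cs G (add (add D A) B)) /\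
    (cs (add G (dj A B)) D <-> (cs (add G A) D /\ cs (add G B) D)).

(* extension of the language by two new binary connectives:
   inr true (to be the conjunction) and inr false (the disjunction) *)
Definition ext_ar (C : Type) (ar : C -> nat) (c : C + bool) : nat :=
  match c with inl c0 => ar c0 | inr _ => 2 end.

Definition ext_interp (V : Type) (C : Type) (ar : C -> nat)
    (interp : forall c : C, ('I_(ar c) -> V) -> V) (fc fd : V -> V -> V) :
    forall c : C + bool, ('I_(ext_ar ar c) -> V) -> V :=
  fun c => match c as c0 return ('I_(ext_ar ar c0) -> V) -> V with
  | inl c0 => interp c0
  | inr b => fun a : 'I_2 -> V => (if b then fc else fd) (a ord0) (a ord_max)
  end.

Definition mk2 (C : Type) (ar : C -> nat) (b : bool)
    (A B : form (ext_ar ar)) : form (ext_ar ar) :=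
  @App _ (ext_ar ar) (inr b) (fun i : 'I_2 => if i == ord0 then A else B).

(* |- admits both a G-disjunction and a G-conjunction: there are truth functions
   which, interpreting two new binary connectives, make the induced consequence
   relation (on the extended language) satisfy the G-rules *)
Definition admits_Gdisj_Gconj (V : finType) (C : Type) (ar : C -> nat)
    (interp : forall c : C, ('I_(ar c) -> V) -> V)
    (R : {set V} -> {set V} -> bool) : Prop :=
  exists fc fd : V -> V -> V,
    G_conjunction (conseq (ext_interp interp fc fd) R) (@mk2 C ar true) /\
    G_disjunction (conseq (ext_interp interp fc fd) R) (@mk2 C ar false).

(* Main.v *)
Require Import Defs.
From mathcomp Require Import all_boot.
From mathcomp Require Import boolp.

Set Implicit Arguments.
Unset Strict Implicit.
Unset Printing Implicit Defensive.

Section S.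
Variables (V : finType) (one zero : V).

Lemma mem_based (L : seq ({set V} * {set V})) D :
  D \in based_list L -> exists2 p, p \in L & (D = p.1 \/ D = p.2).
Proof.
rewrite /based_list => /flattenP [s /mapP [p pL ->]].
rewrite !inE => /orP [/eqP -> | /eqP ->]; exists p => //; [left|right] => //.
Qed.

Lemma based_mem1 (L : seq ({set V} * {set V})) p : p \in L -> p.1 \in based_list L.
Proof. move=> pL; apply/flattenP; exists [:: p.1; p.2]; first by apply/mapP; exists p.
by rewrite !inE eqxx. Qed.

Lemma based_mem2 (L : seq ({set V} * {set V})) p : p \in L -> p.2 \in based_list L.
Proof. move=> pL; apply/flattenP; exists [:: p.1; p.2]; first by apply/mapP; exists p.
by rewrite !inE eqxx orbT. Qed.

Lemma based_des (L : seq ({set V} * {set V})) D :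
  all (fun p => designated one zero p.1 && designated one zero p.2) L ->
  D \in based_list L -> (one \in D) && (zero \notin D).
Proof.
move=> /allP hL /mem_based [p /hL /andP [h1 h2] [->|->]] //.
Qed.

Lemma DC2_DC1 (S : seq {set V}) : DC2 S -> DC1 S.
Proof.
move=> h D DS.
case: (pselect (exists D', [/\ D' \in S, D' != D & D \subset D'])) => [|hn]; first by right.
left; have [|//|x hx] := h [:: D]; first by rewrite sub1seq.
exists x; split; first by rewrite hx // /= subxx.
move=> D' D'S; rewrite hx //= orbF => sub.
apply/eqP; apply/negPn/negP => ne; apply: hn; exists D'; split => //.
Qed.

Lemma DC2_realize (S : seq {set V}) (Q : {set V} -> bool) :
  (forall D, D \in S -> zero \notin D) -> DC2 S ->
  (forall D D', D \in S -> D' \in S -> D' \subset D -> Q D' -> Q D) ->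
  exists x, forall D, D \in S -> (x \in D) = Q D.
Proof.
move=> hz h hQ.
case E: (filter Q S) => [|D0 s].
  exists zero => D DS; rewrite (negbTE (hz D DS)); apply/esym/negP => QD.
  have : D \in filter Q S by rewrite mem_filter QD.
  by rewrite E.
have [||x hx] := h (filter Q S); [exact: filter_subseq| by rewrite E|].
exists x => D DS; rewrite hx //; apply/hasP/idP => [[D' ] |QD].
  by rewrite mem_filter => /andP [QD' D'S] sub; apply: (hQ D D').
by exists D; rewrite ?mem_filter ?QD.
Qed.


Lemma set1I0 (c : V) (C : {set V}) : ([set c] :&: C == set0) = (c \notin C).
Proof.
apply/eqP/idP => [h|h].
  apply/negP => cC; have : c \in [set c] :&: C by rewrite !inE eqxx.
  by rewrite h inE.
apply/setP => x; rewrite !inE; apply/andP => -[/eqP -> cC]; by rewrite cC in h.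
Qed.

Lemma setU1I_neq0 (d C : {set V}) c :
  ((d :|: [set c]) :&: C != set0) = (d :&: C != set0) || (c \in C).
Proof. by rewrite setIUl setU_eq0 negb_and set1I0 negbK. Qed.

Section Rep.
Variables (R : {set V} -> {set V} -> bool) (L : seq ({set V} * {set V})).
Hypothesis hR : forall g d, R g d = all (fun p => mtr p.1 p.2 g d) L.
Hypothesis anti : forall p q, p \in L -> q \in L -> p.1 \subset q.1 -> q.2 \subset p.2 -> p = q.

Lemma Rk k Z W : k \in L ->
  R (k.1 :|: Z) (~: k.2 :|: W) = ~~ ((Z \subset k.1) && (W :&: k.2 == set0)).
Proof.
move=> kL; apply/idP/idP.
  move=> HR; apply/negP => /andP [Zk Wk]; move: HR; rewrite hR => /allP /(_ k kL).
  by rewrite /mtr subUset subxx Zk setIUl setIC setICr set0U Wk.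
rewrite hR => hn; apply/allP => q qL; rewrite /mtr; apply/implyP => Xq; apply/negP => /eqP Yq.
have kq : k = q.
  apply: anti => //; first by apply: subset_trans Xq; apply: subsetUl.
  apply/subsetP => x xq; apply/negPn/negP => xk.
  have : x \in (~: k.2 :|: W) :&: q.2 by rewrite !inE xk xq.
  by rewrite Yq inE.
subst q; move: Xq; rewrite subUset => /andP [_ Zk].
move: hn; rewrite Zk /=; apply/negP; rewrite negbK; apply/eqP/setP => x; rewrite !inE.
apply/negP => /andP [xW xk].
have : x \in (~: k.2 :|: W) :&: k.2 by rewrite !inE xW xk orbT.
by rewrite Yq inE.
Qed.

End Rep.

Lemma min_anti R L : minimal_rep one zero R L ->
  forall p q, p \in L -> q \in L -> p.1 \subset q.1 -> q.2 \subset p.2 -> p = q.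
Proof.
move=> [[ne hd hR] hmin] p q pL qL h1 h2.
apply/eqP/negPn/negP => pq.
have qr : q \in rem p L.
  by move: qL; rewrite (perm_mem (perm_to_rem pL)) inE eq_sym (negbTE pq).
have : is_rep one zero R (rem p L).
  split.
  - by apply/eqP => e; rewrite e in qr.
  - by apply/allP => x /mem_rem xL; exact: (allP hd x xL).
  - move=> g d; rewrite hR (perm_all _ (perm_to_rem pL)) /=.
    case Ha: (all _ (rem p L)); rewrite ?andbF // andbT.
    move/allP: Ha => /(_ q qr); rewrite /mtr => /implyP hq; apply/implyP => gp.
    have /set0Pn [x /setIP [xd xq]] := hq (subset_trans gp h1).
    by apply/set0Pn; exists x; rewrite inE xd (subsetP h2).
move/hmin; rewrite size_rem //.
by case: L pL {hR hd hmin qL qr ne} => // a l _; rewrite /= ltnn.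
Qed.

Lemma ex_min R : intersective_mixed one zero R -> exists L, minimal_rep one zero R L.
Proof.
move=> [L0 h0].
suff: forall n L, size L <= n -> is_rep one zero R L -> exists L, minimal_rep one zero R L.
  by move/(_ _ L0 (leqnn _) h0).
elim => [|n IH] L hs hL.
  by case: hL; case: L hs.
case: (pselect (forall L', is_rep one zero R L' -> size L <= size L')) => [h|h].
  by exists L.
have [L' hL' lt] : exists2 L', is_rep one zero R L' & size L' < size L.
  apply: contra_notP h => hn L' hL'; rewrite leqNgt; apply/negP => lt; apply: hn.
  by exists L'.
by apply: (IH L') => //; rewrite -ltnS (leq_trans lt).
Qed.

End S.

Section Form.
Variables (V : finType) (C : Type) (ar : C -> nat)
  (interp : forall c : C, ('I_(ar c) -> V) -> V).

Lemma imgv_add (C' : Type) (ar' : C' -> nat) (I : forall c : C', ('I_(ar' c) -> V) -> V)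
   v (G : form ar' -> Prop) A :
  imgv I v (add G A) = imgv I v G :|: [set eval I v A].
Proof.
apply/setP => x; rewrite /imgv !inE; apply/asboolP/orP.
  move=> [B [[GB|->] <-]]; last by right.
  by left; apply/asboolP; exists B.
case=> [/asboolP [B [GB <-]]|/eqP ->]; first by exists B; split => //; left.
by exists A; split => //; right.
Qed.

Lemma eval_mk2 fc fd v b A B :
  eval (ext_interp interp fc fd) v (mk2 b A B) =
  (if b then fc else fd) (eval (ext_interp interp fc fd) v A) (eval (ext_interp interp fc fd) v B).
Proof. by []. Qed.

Fixpoint emb (A : form ar) : form (ext_ar ar) :=
  match A with
  | Var n => @Var _ (ext_ar ar) n
  | App c a => @App _ (ext_ar ar) (inl c) (fun i => emb (a i))
  end.

Lemma eval_emb fc fd v A : eval (ext_interp interp fc fd) v (emb A) = eval interp v A.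
Proof.
elim: A => [n|c a IH] //=.
by f_equal; apply: funext => i; apply: IH.
Qed.

End Form.

Section Const.
Variables (V : finType) (C : Type) (ar : C -> nat)
  (interp : forall c : C, ('I_(ar c) -> V) -> V) (fc fd : V -> V -> V)
  (R : {set V} -> {set V} -> bool) (one : V).
Local Notation I := (ext_interp interp fc fd).

Definition cst (G : form (ext_ar ar) -> Prop) (X : {set V}) :=
  forall v, imgv I v G = X.

Lemma cstA G X A a : cst G X -> (forall v, eval I v A = a) -> cst (add G A) (X :|: [set a]).
Proof. by move=> h e v; rewrite imgv_add h e. Qed.

Lemma evM bb A B a b : (forall v, eval I v A = a) -> (forall v, eval I v B = b) ->
  forall v, eval I v (mk2 bb A B) = (if bb then fc else fd) a b.
Proof. by move=> hA hB v; rewrite eval_mk2 hA hB. Qed.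

Lemma csE G D X Y : cst G X -> cst D Y -> (conseq I R G D <-> R X Y).
Proof. by move=> hG hD; rewrite /conseq; split => [/(_ (fun _ => one))|h v]; rewrite hG hD. Qed.

Variables (K : V -> form ar) (HK : forall x v, eval interp v (K x) = x).

Definition Gam (X : {set V}) : form (ext_ar ar) -> Prop :=
  fun A => exists2 x, x \in X & A = emb (K x).

Lemma evK x v : eval I v (emb (K x)) = x.
Proof. by rewrite eval_emb HK. Qed.

Lemma cstG X : cst (Gam X) X.
Proof.
move=> v; apply/setP => x; rewrite /imgv inE; apply/asboolP/idP => [[A [[y yX ->] <-]]| xX].
  by rewrite evK.
by exists (emb (K x)); split; [exists x | rewrite evK].
Qed.

Hypothesis hc : G_conjunction (conseq I R) (@mk2 C ar true).
Hypothesis hd : G_disjunction (conseq I R) (@mk2 C ar false).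

Lemma C1 X Y a b : R (X :|: [set fc a b]) Y = R (X :|: [set a] :|: [set b]) Y.
Proof.
have [h _] := hc (Gam X) (Gam Y) (emb (K a)) (emb (K b)).
move: h; rewrite (csE (cstA (cstG X) (evM true (evK a) (evK b))) (cstG Y)).
rewrite (csE (cstA (cstA (cstG X) (evK a)) (evK b)) (cstG Y)).
by move=> h; apply/idP/idP => /h.
Qed.

Lemma C2 X Y a b : R X (Y :|: [set fc a b]) = R X (Y :|: [set a]) && R X (Y :|: [set b]).
Proof.
have [_ h] := hc (Gam X) (Gam Y) (emb (K a)) (emb (K b)).
move: h; rewrite (csE (cstG X) (cstA (cstG Y) (evM true (evK a) (evK b)))).
rewrite (csE (cstG X) (cstA (cstG Y) (evK a))) (csE (cstG X) (cstA (cstG Y) (evK b))).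
by move=> h; apply/idP/andP => /h.
Qed.

Lemma D1 X Y a b : R X (Y :|: [set fd a b]) = R X (Y :|: [set a] :|: [set b]).
Proof.
have [h _] := hd (Gam X) (Gam Y) (emb (K a)) (emb (K b)).
move: h; rewrite (csE (cstG X) (cstA (cstG Y) (evM false (evK a) (evK b)))).
rewrite (csE (cstG X) (cstA (cstA (cstG Y) (evK a)) (evK b))).
by move=> h; apply/idP/idP => /h.
Qed.

Lemma D2 X Y a b : R (X :|: [set fd a b]) Y = R (X :|: [set a]) Y && R (X :|: [set b]) Y.
Proof.
have [_ h] := hd (Gam X) (Gam Y) (emb (K a)) (emb (K b)).
move: h; rewrite (csE (cstA (cstG X) (evM false (evK a) (evK b))) (cstG Y)).
rewrite (csE (cstA (cstG X) (evK a)) (cstG Y)) (csE (cstA (cstG X) (evK b)) (cstG Y)).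
by move=> h; apply/idP/andP => /h.
Qed.

End Const.

Lemma i_ii (V : finType) (one zero : V) (C : Type) (ar : C -> nat)
    (interp : forall c : C, ('I_(ar c) -> V) -> V) R L :
  constant_expressive interp -> admits_Gdisj_Gconj interp R ->
  minimal_rep one zero R L -> dc_compatible (based_list L).
Proof.
move=> ce [fc [fd [hc hd]]] hmin.
have anti := min_anti hmin; have [[ne hdes hR] _] := hmin.
have [K HK] := choice ce.
have C1' := @C1 _ _ _ _ _ _ _ one _ HK hc.
have C2' := @C2 _ _ _ _ _ _ _ one _ HK hc.
have D1' := @D1 _ _ _ _ _ _ _ one _ HK hd.
have D2' := @D2 _ _ _ _ _ _ _ one _ HK hd.
have hfc : forall a b D, D \in based_list L -> (fc a b \in D) = (a \in D) && (b \in D).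
  move=> a b D /mem_based [k kL [->|->]].
    have := C1' k.1 (~: k.2 :|: set0) a b.
    rewrite -setUA !(Rk hR anti) // !subUset !sub1set set0I eqxx !andbT.
    by move/negb_inj.
  have := C2' (k.1 :|: set0) (~: k.2) a b.
  by rewrite !(Rk hR anti) // sub0set !set1I0 /= !negbK.
have hfd : forall a b D, D \in based_list L -> (fd a b \in D) = (a \in D) || (b \in D).
  move=> a b D /mem_based [k kL [->|->]].
    have := D2' k.1 (~: k.2 :|: set0) a b.
    rewrite !(Rk hR anti) // !sub1set set0I eqxx !andbT -negb_or.
    by move/negb_inj.
  have := D1' (k.1 :|: set0) (~: k.2) a b.
  by rewrite -setUA !(Rk hR anti) // sub0set setIUl setU_eq0 !set1I0 /= negb_and !negbK.
have dc2 : DC2 (based_list L).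
  move=> L' _ _; exists (foldr fd zero (map (fun D' : {set V} => foldr fc one (enum D')) L')) => D DS.
  have [oD zD] := andP (based_des hdes DS).
  have fcf : forall s, (foldr fc one s \in D) = all (fun y => y \in D) s.
    by elim => [|y s IH] //=; rewrite hfc // IH.
  have fdf : forall s, (foldr fd zero s \in D) = has (fun y => y \in D) s.
    by elim => [|y s IH] /=; [exact: negbTE | rewrite hfd // IH].
  rewrite fdf has_map; apply: eq_has => D' /=; rewrite fcf.
  apply/allP/subsetP => h y; [move=> yD'; apply: h; rewrite mem_enum // | rewrite mem_enum; apply: h].
by split => //; apply: DC2_DC1.
Qed.

Lemma iii_i (V : finType) (one zero : V) (C : Type) (ar : C -> nat)
    (interp : forall c : C, ('I_(ar c) -> V) -> V) R L :
  is_rep one zero R L -> DC2 (based_list L) -> admits_Gdisj_Gconj interp R.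
Proof.
move=> [ne hdes hR] dc.
have hz : forall D, D \in based_list L -> zero \notin D.
  by move=> D /(based_des hdes) /andP [].
have [fc hfc] : exists fc : V -> V -> V, forall a b D, D \in based_list L ->
    (fc a b \in D) = (a \in D) && (b \in D).
  have h : forall ab : V * V, exists c, forall D, D \in based_list L ->
      (c \in D) = (ab.1 \in D) && (ab.2 \in D).
    move=> ab; apply: (DC2_realize hz dc) => D D' _ _ /subsetP sub /andP [h1 h2].
    by rewrite !sub.
  have [f hf] := choice h; exists (fun a b => f (a, b)) => a b; exact: (hf (a, b)).
have [fd hfd] : exists fd : V -> V -> V, forall a b D, D \in based_list L ->
    (fd a b \in D) = (a \in D) || (b \in D).
  have h : forall ab : V * V, exists c, forall D, D \in based_list L ->
      (c \in D) = (ab.1 \in D) || (ab.2 \in D).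
    move=> ab; apply: (DC2_realize hz dc) => D D' _ _ /subsetP sub /orP [h1|h2].
      by rewrite (sub _ h1).
    by rewrite (sub _ h2) orbT.
  have [f hf] := choice h; exists (fun a b => f (a, b)) => a b; exact: (hf (a, b)).
have cL : forall g d a b, R (g :|: [set fc a b]) d = R (g :|: [set a] :|: [set b]) d.
  move=> g d a b; rewrite !hR; apply: eq_in_all => p pL.
  by rewrite /mtr !subUset !sub1set hfc ?(based_mem1 pL) // andbA.
have cR : forall g d a b, R g (d :|: [set fc a b]) = R g (d :|: [set a]) && R g (d :|: [set b]).
  move=> g d a b; rewrite !hR -all_predI; apply: eq_in_all => p pL /=.
  rewrite /mtr !setU1I_neq0 hfc ?(based_mem2 pL) //.
  by case: (g \subset p.1); case: (d :&: p.2 != set0); case: (a \in p.2); case: (b \in p.2).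
have dL : forall g d a b, R (g :|: [set fd a b]) d = R (g :|: [set a]) d && R (g :|: [set b]) d.
  move=> g d a b; rewrite !hR -all_predI; apply: eq_in_all => p pL /=.
  rewrite /mtr !subUset !sub1set hfd ?(based_mem1 pL) //.
  by case: (g \subset p.1); case: (d :&: p.2 != set0); case: (a \in p.1); case: (b \in p.1).
have dR : forall g d a b, R g (d :|: [set fd a b]) = R g (d :|: [set a] :|: [set b]).
  move=> g d a b; rewrite !hR; apply: eq_in_all => p pL.
  by rewrite /mtr !setU1I_neq0 hfd ?(based_mem2 pL) // orbA.
exists fc, fd; split => G D A B; split; rewrite /conseq.
- by split => h v; move: (h v); rewrite !imgv_add eval_mk2 /= cL.
- split => [h|[h1 h2] v].
    by split => v; move: (h v); rewrite !imgv_add eval_mk2 /= cR => /andP [].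
  rewrite !imgv_add eval_mk2 /= cR; apply/andP; split.
    by move: (h1 v); rewrite !imgv_add.
  by move: (h2 v); rewrite !imgv_add.
- by split => h v; move: (h v); rewrite !imgv_add eval_mk2 /= dR.
- split => [h|[h1 h2] v].
    by split => v; move: (h v); rewrite !imgv_add eval_mk2 /= dL => /andP [].
  rewrite !imgv_add eval_mk2 /= dL; apply/andP; split.
    by move: (h1 v); rewrite !imgv_add.
  by move: (h2 v); rewrite !imgv_add.
Qed.

Unset Implicit Arguments.

Theorem theorem7p6 (V : finType) (one zero : V) (C : Type) (ar : C -> nat)
    (interp : forall c : C, ('I_(ar c) -> V) -> V)
    (R : {set V} -> {set V} -> bool) :
  one != zero ->
  intersective_mixed one zero R ->
  constant_expressive interp ->
  (admits_Gdisj_Gconj interp R <->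
     (forall L, minimal_rep one zero R L -> dc_compatible (based_list L))) /\
  (admits_Gdisj_Gconj interp R <->
     (exists L, is_rep one zero R L /\ dc_compatible (based_list L))).
Proof.
move=> _ im ce.
have i_ii' : admits_Gdisj_Gconj interp R ->
    forall L, minimal_rep one zero R L -> dc_compatible (based_list L).
  by move=> h L; apply: i_ii.
have ii_iii : (forall L, minimal_rep one zero R L -> dc_compatible (based_list L)) ->
    exists L, is_rep one zero R L /\ dc_compatible (based_list L).
  move=> h; have [L hL] := ex_min im; exists L; split; [exact: hL.1 | exact: h].
have iii_i' : (exists L, is_rep one zero R L /\ dc_compatible (based_list L)) ->
    admits_Gdisj_Gconj interp R.
  by move=> [L [hL [_ dc]]]; apply: (iii_i _ hL dc).
split; split => //.
- by move=> h; apply: iii_i'; apply: ii_iii.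
- by move=> h; apply: ii_iii; apply: i_ii'.
Qed.
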